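(* Let $K$ be a field of characteristic $0$, let $L=\mathcal{L}(x,y)$ be the free Lie algebra over $K$ freely generated by $x,y$, let $\delta$ be the derivation of $L$ with $\delta(x)=0$, $\delta(y)=x$, and $L^\delta=\ker\delta$. Let $f\neq 0$ be a multihomogeneous element of $L$ with $\deg_y(f)=3$ and $\deg(f)=n$. Then $f\in L^\delta$ if and only if $f$ belongs to the Lie subalgebra of $L$ generated by $x$, $[y,x]$ and the elements $$[y, \underbrace{x, \ldots, x}_k, [y, \underbrace{x, \ldots, x}_{n-3-k}, y]] - [y,\underbrace{x, \ldots, x}_{k-1}, y, [y, \underbrace{x, \ldots, x}_{n-2-k}]]$$ for integers $k$ with $\frac{n-2}{2}\leq k\leq n-4$.
   Context: Brackets are left-normed: $[a_1,a_2,\ldots,a_n]=[[\ldots[a_1,a_2],\ldots],a_n]$, and an inner bracket denotes a left-normed element inserted as a single argument. *)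

(* Defs.v *)
(* The free Lie algebra L(x,y) over K is modelled as the Lie
   subalgebra generated by x and y inside the (noncommutative) formal power
   series algebra K<<x,y>>, i.e. the Lie polynomials (Lie subalgebra of
   K<x,y> generated by x, y), which is the standard model of the free Lie
   algebra.  Words are [seq bool], with false = x and true = y. *)
From HB Require Import structures.
From mathcomp Require Import all_boot all_order all_algebra.
Set Implicit Arguments. Unset Strict Implicit. Unset Printing Implicit Defensive.
Import Order.TTheory GRing.Theory Num.Theory.
Local Open Scope ring_scope.

Section FreeLie.
Variable K : fieldType.

Definition ser := seq bool -> K.

Definition sx : ser := fun w => if w == [:: false] then 1 else 0.
Definition sy : ser := fun w => if w == [:: true] then 1 else 0.
Definition szero : ser := fun _ => 0.
Definition sadd (f g : ser) : ser := fun w => f w + g w.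
Definition ssub (f g : ser) : ser := fun w => f w - g w.
Definition sscale (a : K) (f : ser) : ser := fun w => a * f w.
Definition smul (f g : ser) : ser :=
  fun w => \sum_(i < (size w).+1) f (take i w) * g (drop i w).
Definition sbr (f g : ser) : ser := ssub (smul f g) (smul g f).

(* left-normed bracket [a_1, a_2, ..., a_n] = [[...[a_1,a_2],...],a_n] *)
Definition lbr (a : ser) (s : seq ser) : ser := foldl sbr a s.

Inductive lie_gen (S : ser -> Prop) : ser -> Prop :=
| lie_gen_base f : S f -> lie_gen S f
| lie_gen_add f g : lie_gen S f -> lie_gen S g -> lie_gen S (sadd f g)
| lie_gen_scale a f : lie_gen S f -> lie_gen S (sscale a f)
| lie_gen_br f g : lie_gen S f -> lie_gen S g -> lie_gen S (sbr f g).

Definition in_L (f : ser) : Prop := lie_gen (fun g => g = sx \/ g = sy) f.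

(* the derivation delta with delta(x) = 0, delta(y) = x, extended to K<<x,y>>:
   the coefficient of w in delta f is the sum, over positions of w carrying x,
   of the coefficient in f of the word obtained by replacing that x by y *)
Definition sdelta (f : ser) : ser :=
  fun w => \sum_(i < size w | nth true w i == false) f (set_nth false w i true).

Definition multihom (f : ser) (dx dy : nat) : Prop :=
  forall w, f w != 0 -> count negb w = dx /\ count id w = dy.

Definition gen_elt (n k : nat) : ser :=
  ssub (lbr sy (nseq k sx ++ [:: lbr sy (nseq (n - 3 - k) sx ++ [:: sy])]))
       (lbr sy (nseq (k - 1) sx ++ [:: sy; lbr sy (nseq (n - 2 - k) sx)])).

Definition cor_gens (n : nat) (g : ser) : Prop :=
  g = sx \/ g = sbr sy sx \/
  exists k : nat, [/\ (n - 2 <= 2 * k)%N, (k <= n - 4)%N & g = gen_elt n k].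

End FreeLie.

(* Main.v *)
Require Import Defs.
From mathcomp Require Import all_boot all_order all_algebra.
From Stdlib Require Import FunctionalExtensionality.
From mathcomp Require Import ring lra zify.
Set Implicit Arguments. Unset Strict Implicit. Unset Printing Implicit Defensive.
Import GRing.Theory.
Local Open Scope ring_scope.



Section Basics.
Variable K : fieldType.
Local Notation ser := (ser K).
Local Notation X := (sx K).
Local Notation Yy := (sy K).
Local Notation Z := (szero K).

Definition shift (a : bool) (f : ser) : ser := fun u => f (a :: u).

Lemma smul_nil (f g : ser) : smul f g [::] = f [::] * g [::].
Proof. by rewrite /smul big_ord_recl big_ord0 addr0. Qed.

Lemma smul_cons (f g : ser) a w :
  smul f g (a :: w) = f [::] * g (a :: w) + smul (shift a f) g w.
Proof. by rewrite /smul /= big_ord_recl. Qed.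

Lemma sdelta_nil (f : ser) : sdelta f [::] = 0.
Proof. by rewrite /sdelta big_ord0. Qed.

Lemma sdelta_cons (f : ser) a w :
  sdelta f (a :: w) = (if a == false then f (true :: w) else 0)
                      + sdelta (shift a f) w.
Proof.
rewrite /sdelta big_mkcond /= big_ord_recl /=; congr (_ + _).
by rewrite [RHS]big_mkcond.
Qed.

Lemma smul0l (g : ser) w : smul Z g w = 0.
Proof. by rewrite /smul big1 // => i _; rewrite /szero mul0r. Qed.

Lemma smulDl (f1 f2 g : ser) w :
  smul (sadd f1 f2) g w = smul f1 g w + smul f2 g w.
Proof. by rewrite /smul -big_split; apply: eq_bigr => i _; rewrite /sadd mulrDl. Qed.
Lemma smulDr (f g1 g2 : ser) w :
  smul f (sadd g1 g2) w = smul f g1 w + smul f g2 w.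
Proof. by rewrite /smul -big_split; apply: eq_bigr => i _; rewrite /sadd mulrDr. Qed.
Lemma smulBl (f1 f2 g : ser) w :
  smul (ssub f1 f2) g w = smul f1 g w - smul f2 g w.
Proof. by rewrite /smul -sumrB; apply: eq_bigr => i _; rewrite /ssub mulrBl. Qed.
Lemma smulBr (f g1 g2 : ser) w :
  smul f (ssub g1 g2) w = smul f g1 w - smul f g2 w.
Proof. by rewrite /smul -sumrB; apply: eq_bigr => i _; rewrite /ssub mulrBr. Qed.
Lemma smulZl a (f g : ser) w : smul (sscale a f) g w = a * smul f g w.
Proof. by rewrite /smul mulr_sumr; apply: eq_bigr => i _; rewrite /sscale mulrA. Qed.
Lemma smulZr a (f g : ser) w : smul f (sscale a g) w = a * smul f g w.
Proof.
by rewrite /smul mulr_sumr; apply: eq_bigr => i _; rewrite /sscale mulrCA.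
Qed.
Lemma smul_ext (f1 f2 g1 g2 : ser) w :
  (forall u, f1 u = f2 u) -> (forall u, g1 u = g2 u) -> smul f1 g1 w = smul f2 g2 w.
Proof. by move=> h1 h2; rewrite /smul; apply: eq_bigr => i _; rewrite h1 h2. Qed.

Lemma shift_smul a (f g : ser) u :
  shift a (smul f g) u = f [::] * shift a g u + smul (shift a f) g u.
Proof. by rewrite /shift smul_cons. Qed.

Lemma smulA (f g h : ser) w : smul (smul f g) h w = smul f (smul g h) w.
Proof.
elim: w f => [|a w IH] f.
  by rewrite !smul_nil mulrA.
rewrite !smul_cons smul_nil.
have -> : smul (shift a (smul f g)) h w =
          f [::] * smul (shift a g) h w + smul (smul (shift a f) g) h w.
  rewrite -smulZl -smulDl; apply: smul_ext => // u.
  by rewrite shift_smul.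
by rewrite IH mulrDr !mulrA addrA.
Qed.


Lemma sbrE (f g : ser) w : sbr f g w = smul f g w - smul g f w.
Proof. by []. Qed.
Lemma smul_sbrl (f g h : ser) w :
  smul (sbr f g) h w = smul (smul f g) h w - smul (smul g f) h w.
Proof. exact: smulBl. Qed.
Lemma smul_sbrr (f g h : ser) w :
  smul h (sbr f g) w = smul h (smul f g) w - smul h (smul g f) w.
Proof. exact: smulBr. Qed.

Lemma jacobi (A B C : ser) :
  sbr (sbr A B) C = sadd (sbr (sbr A C) B) (sbr A (sbr B C)).
Proof.
apply: functional_extensionality => w.
rewrite /sadd !sbrE !smul_sbrl !smul_sbrr !smulA.
ring.
Qed.

Lemma sbr_anti (f g : ser) : sbr f g = sscale (-1) (sbr g f).
Proof.
apply: functional_extensionality => w.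
by rewrite /sscale !sbrE; ring.
Qed.

Lemma sbr_self (f : ser) : sbr f f = Z.
Proof. by apply: functional_extensionality => w; rewrite sbrE subrr. Qed.

Lemma sbrDl (f1 f2 g : ser) : sbr (sadd f1 f2) g = sadd (sbr f1 g) (sbr f2 g).
Proof.
apply: functional_extensionality => w.
by rewrite /sadd !sbrE smulDl smulDr; ring.
Qed.
Lemma sbrDr (f g1 g2 : ser) : sbr f (sadd g1 g2) = sadd (sbr f g1) (sbr f g2).
Proof.
apply: functional_extensionality => w.
by rewrite /sadd !sbrE smulDl smulDr; ring.
Qed.
Lemma sbrZl a (f g : ser) : sbr (sscale a f) g = sscale a (sbr f g).
Proof.
apply: functional_extensionality => w.
by rewrite /sscale !sbrE smulZl smulZr; ring.
Qed.
Lemma sbrZr a (f g : ser) : sbr f (sscale a g) = sscale a (sbr f g).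
Proof.
apply: functional_extensionality => w.
by rewrite /sscale !sbrE smulZl smulZr; ring.
Qed.
Lemma szero_scale (f : ser) : Z = sscale 0 f.
Proof. by apply: functional_extensionality => w; rewrite /sscale mul0r. Qed.
Lemma smul0r (g : ser) w : smul g Z w = 0.
Proof. by rewrite /smul big1 // => i _; rewrite /szero mulr0. Qed.
Lemma sbr0l (g : ser) : sbr Z g = Z.
Proof. by apply: functional_extensionality => w; rewrite sbrE smul0l smul0r subrr. Qed.
Lemma sbr0r (g : ser) : sbr g Z = Z.
Proof. by apply: functional_extensionality => w; rewrite sbrE smul0l smul0r subrr. Qed.
Lemma sadd0r (f : ser) : sadd f Z = f.
Proof. by apply: functional_extensionality => w; rewrite /sadd addr0. Qed.
Lemma sadd0l (f : ser) : sadd Z f = f.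
Proof. by apply: functional_extensionality => w; rewrite /sadd add0r. Qed.


Lemma sdelta_ext (f g : ser) : (forall u, f u = g u) -> forall w, sdelta f w = sdelta g w.
Proof. by move=> h w; rewrite /sdelta; apply: eq_bigr => i _; rewrite h. Qed.
Lemma sdeltaD (f g : ser) : sdelta (sadd f g) = sadd (sdelta f) (sdelta g).
Proof. by apply: functional_extensionality => w; rewrite /sdelta /sadd big_split. Qed.
Lemma sdeltaZ a (f : ser) : sdelta (sscale a f) = sscale a (sdelta f).
Proof. by apply: functional_extensionality => w; rewrite /sdelta /sscale mulr_sumr. Qed.
Lemma sdelta0 : sdelta Z = Z.
Proof. by apply: functional_extensionality => w; rewrite /sdelta big1. Qed.

Lemma sdelta_smul (f g : ser) w :
  sdelta (smul f g) w = smul (sdelta f) g w + smul f (sdelta g) w.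
Proof.
elim: w f g => [|a w IH] f g.
  by rewrite sdelta_nil !smul_nil !sdelta_nil mul0r mulr0 addr0.
rewrite sdelta_cons !smul_cons !sdelta_nil mul0r add0r.
rewrite (@sdelta_ext (shift a (smul f g))
   (sadd (sscale (f [::]) (shift a g)) (smul (shift a f) g))); last first.
  by move=> u; rewrite shift_smul.
rewrite sdeltaD sdeltaZ /sadd /sscale IH.
rewrite (@smul_ext (shift a (sdelta f)) (sadd (sscale (if a == false then 1 else 0) (shift true f)) (sdelta (shift a f))) g g); last 2 first.
- by move=> u; rewrite /shift sdelta_cons /sadd /sscale; case: a => /=; ring.
- by [].
rewrite smulDl smulZl sdelta_cons.
case: a => /=; rewrite ?smul_cons; ring.
Qed.

Lemma sdelta_sbr (f g : ser) :
  sdelta (sbr f g) = sadd (sbr (sdelta f) g) (sbr f (sdelta g)).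
Proof.
apply: functional_extensionality => w.
rewrite /sadd !sbrE.
have -> : sdelta (sbr f g) w = sdelta (smul f g) w - sdelta (smul g f) w.
  by rewrite /sdelta -sumrB.
rewrite !sdelta_smul; ring.
Qed.

Lemma sdelta_sx : sdelta X = Z.
Proof.
apply: functional_extensionality => w; rewrite /sdelta big1 // => i _.
rewrite /sx /szero; case: ifP => // /eqP h.
have : nth false (set_nth false w i true) i = true by rewrite nth_set_nth /= eqxx.
by rewrite h; case: (nat_of_ord i) => [|[]].
Qed.

Lemma sdelta_sy : sdelta Yy = X.
Proof.
apply: functional_extensionality => w; rewrite /sdelta /sx /sy.
case: w => [|a [|b w]].
- by rewrite big_ord0.
- by rewrite big_mkcond big_ord_recl big_ord0 /=; case: a => /=; rewrite ?addr0.
- have -> : ([:: a, b & w] == [:: false]) = false by case: a.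
  apply: big1 => i _; case: ifP => // /eqP h.
  by have := congr1 size h; rewrite size_set_nth /= maxnE; lia.
Qed.

End Basics.



Section Deg.
Variable K : fieldType.
Local Notation ser := (ser K).
Local Notation X := (sx K).
Local Notation Yy := (sy K).
Local Notation Z := (szero K).

Definition Y (p : nat) : ser := lbr Yy (nseq p X).

Lemma nseqS_rcons T (x : T) p : nseq p.+1 x = rcons (nseq p x) x.
Proof. by elim: p => //= p ->. Qed.

Lemma Y0 : Y 0 = Yy. Proof. by []. Qed.
Lemma YS p : Y p.+1 = sbr (Y p) X.
Proof. by rewrite /Y /lbr nseqS_rcons foldl_rcons. Qed.

Lemma lbr_cat (a : ser) s t : lbr a (s ++ t) = lbr (lbr a s) t.
Proof. by rewrite /lbr foldl_cat. Qed.

Lemma sdelta_Y0 : sdelta (Y 0) = X.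
Proof. exact: sdelta_sy. Qed.
Lemma sdelta_YS p : sdelta (Y p.+1) = Z.
Proof.
elim: p => [|p IH].
  by rewrite YS sdelta_sbr sdelta_Y0 sdelta_sx sbr_self sbr0r sadd0r.
by rewrite YS sdelta_sbr IH sdelta_sx sbr0l sbr0r sadd0r.
Qed.

Lemma sum_neq0 (I : finType) (F : I -> K) : \sum_i F i != 0 -> exists i, F i != 0.
Proof.
move=> h; apply/existsP; apply: contraR h => /existsPn h.
by rewrite big1 // => i _; move: (h i); rewrite negbK => /eqP.
Qed.

Lemma mh_smul (f g : ser) p1 q1 p2 q2 :
  multihom f p1 q1 -> multihom g p2 q2 -> multihom (smul f g) (p1 + p2) (q1 + q2).
Proof.
move=> hf hg w /sum_neq0 [i]; rewrite mulf_eq0 negb_or => /andP [h1 h2].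
have [a1 b1] := hf _ h1; have [a2 b2] := hg _ h2.
by rewrite -(cat_take_drop i w) !count_cat a1 b1 a2 b2.
Qed.

Lemma mh_sbr (f g : ser) p1 q1 p2 q2 :
  multihom f p1 q1 -> multihom g p2 q2 -> multihom (sbr f g) (p1 + p2) (q1 + q2).
Proof.
move=> hf hg w; rewrite sbrE => h.
case E: (smul f g w == 0).
  move: h; rewrite (eqP E) sub0r oppr_eq0 => h.
  by rewrite addnC [(q1 + _)%N]addnC; apply: (mh_smul hg hf).
by apply: (mh_smul hf hg); rewrite E.
Qed.

Lemma mh_sx : multihom X 1 0.
Proof. by move=> w; rewrite /sx; case: ifP => [/eqP -> | ]; rewrite ?eqxx. Qed.
Lemma mh_sy : multihom Yy 0 1.
Proof. by move=> w; rewrite /sy; case: ifP => [/eqP -> | ]; rewrite ?eqxx. Qed.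

Lemma mh_Y p : multihom (Y p) p 1.
Proof.
elim: p => [|p IH]; first exact: mh_sy.
by rewrite YS; have := mh_sbr IH mh_sx; rewrite addn1 addn0.
Qed.

Lemma mh_zero (f : ser) p q w : multihom f p q ->
  (count negb w != p) || (count id w != q) -> f w = 0.
Proof.
move=> hf h; apply/eqP; apply: contraLR h => /hf [-> ->].
by rewrite !eqxx.
Qed.

Definition piy (q : nat) (f : ser) : ser :=
  fun w => if count id w == q then f w else 0.
Definition pix (p : nat) (f : ser) : ser :=
  fun w => if count negb w == p then f w else 0.

Lemma sum_ind_nat (N k : nat) (F : nat -> K) : (k < N)%N ->
  \sum_(p < N) (if k == p then F p else 0) = F k.
Proof.
move=> hk; rewrite (bigD1 (Ordinal hk)) //= eqxx big1 ?addr0 // => i.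
by rewrite -val_eqE /= eq_sym => /negbTE ->.
Qed.

Lemma piy_smul q (g h : ser) w :
  piy q (smul g h) w = \sum_(q1 < q.+1) smul (piy q1 g) (piy (q - q1) h) w.
Proof.
rewrite /piy /smul exchange_big /=.
case: ifP => hw.
  apply: eq_bigr => i _.
  have hc : (count id (take i w) + count id (drop i w))%N = q.
    by rewrite -count_cat cat_take_drop (eqP hw).
  have hk : (count id (take i w) < q.+1)%N by lia.
  rewrite -(sum_ind_nat (fun _ => g (take i w) * h (drop i w)) hk).
  apply: eq_bigr => j _.
  case: eqP => [<-|hne]; first by rewrite -hc addKn eqxx.
  by rewrite mul0r.
rewrite big1 // => i _; rewrite big1 // => j _.
case: eqP => [e1|]; last by rewrite mul0r.
case: eqP => [e2|]; last by rewrite mulr0.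
have hc : count id w = (count id (take i w) + count id (drop i w))%N.
  by rewrite -count_cat cat_take_drop.
move: hw; rewrite hc e1 e2.
have := ltn_ord j; lia.
Qed.

End Deg.



Section SpanS.
Variable K : fieldType.
Local Notation ser := (ser K).
Local Notation X := (sx K).
Local Notation Yy := (sy K).
Local Notation Z := (szero K).
Local Notation Y := (@Y K).

Inductive Span (S : ser -> Prop) : ser -> Prop :=
| span0 : Span S Z
| spanB f : S f -> Span S f
| spanD f g : Span S f -> Span S g -> Span S (sadd f g)
| spanZ a f : Span S f -> Span S (sscale a f).

Lemma span_br (A B C : ser -> Prop) f g :
  (forall a b, A a -> B b -> Span C (sbr a b)) -> Span A f -> Span B g -> Span C (sbr f g).
Proof.
move=> hAB hf hg; elim: hf => [|a ha|f1 f2 _ h1 _ h2|c f1 _ h1].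
- by rewrite sbr0l; apply: span0.
- elim: hg => [|b hb|g1 g2 _ h1 _ h2|c g1 _ h1].
  + by rewrite sbr0r; apply: span0.
  + exact: hAB.
  + by rewrite sbrDr; apply: spanD.
  + by rewrite sbrZr; apply: spanZ.
- by rewrite sbrDl; apply: spanD.
- by rewrite sbrZl; apply: spanZ.
Qed.

Definition ssum (n : nat) (F : nat -> ser) : ser := fun w => \sum_(i < n) F i w.

Lemma span_ssum S n F : (forall i, (i < n)%N -> Span S (F i)) -> Span S (ssum n F).
Proof.
elim: n => [|n IH] h.
  have -> : ssum 0 F = Z by apply: functional_extensionality => w; rewrite /ssum big_ord0.
  exact: span0.
have -> : ssum n.+1 F = sadd (ssum n F) (F n).
  by apply: functional_extensionality => w; rewrite /ssum /sadd big_ord_recr.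
apply: spanD; last exact: h.
by apply: IH => i hi; apply: h; lia.
Qed.

Lemma piy_sbr q (g h : ser) :
  piy q (sbr g h) = ssum q.+1 (fun q1 => sbr (piy q1 g) (piy (q - q1) h)).
Proof.
apply: functional_extensionality => w.
have -> : piy q (sbr g h) w = piy q (smul g h) w - piy q (smul h g) w.
  by rewrite /piy; case: ifP; rewrite ?subrr.
rewrite /ssum; under eq_bigr do rewrite sbrE.
rewrite sumrB !piy_smul; congr (_ - _).
rewrite (reindex_inj rev_ord_inj); apply: eq_bigr => i _ /=.
have hi := ltn_ord i.
by rewrite subSS (_ : (q - (q - i) = i)%N) //; lia.
Qed.

Definition C (q : nat) (g : ser) : Prop :=
  match q with
  | 0 => g = X
  | 1 => exists p, g = Y p
  | 2 => exists a b, g = sbr (Y a) (Y b)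
  | 3 => exists a b c, g = sbr (sbr (Y a) (Y b)) (Y c)
  | _ => False
  end.

Lemma br_X_Y b : sbr X (Y b) = sscale (-1) (Y b.+1).
Proof. by rewrite sbr_anti YS. Qed.
Lemma br_YY_X a b : sbr (sbr (Y a) (Y b)) X = sadd (sbr (Y a.+1) (Y b)) (sbr (Y a) (Y b.+1)).
Proof. by rewrite jacobi -!YS. Qed.
Lemma br_YYY_X a b c : sbr (sbr (sbr (Y a) (Y b)) (Y c)) X =
  sadd (sadd (sbr (sbr (Y a.+1) (Y b)) (Y c)) (sbr (sbr (Y a) (Y b.+1)) (Y c)))
       (sbr (sbr (Y a) (Y b)) (Y c.+1)).
Proof. by rewrite jacobi br_YY_X -YS sbrDl. Qed.

Lemma spanBC q g : C q g -> Span (C q) g.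
Proof. exact: spanB. Qed.

Lemma basis_br q1 q2 a b : (q1 + q2 <= 3)%N -> C q1 a -> C q2 b ->
  Span (C (q1 + q2)) (sbr a b).
Proof.
case: q1 => [|[|[|[|q1]]]]; case: q2 => [|[|[|[|q2]]]] //= _.
- by move=> -> ->; rewrite sbr_self; apply: span0.
- move=> -> [p ->]; rewrite br_X_Y; apply: spanZ; apply: spanB; by exists p.+1.
- move=> -> [a' [b' ->]]; rewrite sbr_anti br_YY_X; apply: spanZ.
  by apply: spanD; apply: spanB; do 2 eexists.
- move=> -> [a' [b' [c' ->]]]; rewrite sbr_anti br_YYY_X; apply: spanZ.
  by apply: spanD; [apply: spanD|]; apply: spanB; do 3 eexists.
- move=> [p ->] ->; rewrite -YS; apply: spanB; by exists p.+1.
- by move=> [p ->] [p' ->]; apply: spanB; do 2 eexists.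
- move=> [p ->] [a' [b' ->]]; rewrite sbr_anti; apply: spanZ.
  by apply: spanB; do 3 eexists.
- move=> [a' [b' ->]] ->; rewrite br_YY_X.
  by apply: spanD; apply: spanB; do 2 eexists.
- by move=> [a' [b' ->]] [p ->]; apply: spanB; do 3 eexists.
- move=> [a' [b' [c' ->]]] ->; rewrite br_YYY_X.
  by apply: spanD; [apply: spanD|]; apply: spanB; do 3 eexists.
Qed.

Lemma piyD q (f g : ser) : piy q (sadd f g) = sadd (piy q f) (piy q g).
Proof. by apply: functional_extensionality => w; rewrite /piy /sadd; case: ifP; rewrite ?addr0. Qed.
Lemma piyZ q a (f : ser) : piy q (sscale a f) = sscale a (piy q f).
Proof. by apply: functional_extensionality => w; rewrite /piy /sscale; case: ifP; rewrite ?mulr0. Qed.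

Lemma main_span g : in_L g -> forall q, (q <= 3)%N -> Span (C q) (piy q g).
Proof.
elim => [f [->|->] | f1 f2 _ h1 _ h2 | a f _ h1 | f1 f2 _ h1 _ h2] q hq.
- case: q hq => [|q] hq.
    have -> : piy 0 X = X.
      apply: functional_extensionality => w; rewrite /piy /sx.
      by case: (w =P [:: false]) => [->|_] //; case: ifP.
    exact: spanB.
  have -> : piy q.+1 X = Z.
    apply: functional_extensionality => w; rewrite /piy /sx /szero.
    by case: (w =P [:: false]) => [->|_] //; case: ifP.
  exact: span0.
- case: (q =P 1%N) => [->|hq1].
    have -> : piy 1 Yy = Y 0.
      apply: functional_extensionality => w; rewrite Y0 /piy /sy.
      by case: (w =P [:: true]) => [->|_] //; case: ifP.
    by apply: spanB; exists 0%N.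
  have -> : piy q Yy = Z.
    apply: functional_extensionality => w; rewrite /piy /sy /szero.
    case: (w =P [:: true]) => [->|_] /=; last by case: ifP.
    by case: ifP => // /eqP h; case: hq1.
  exact: span0.
- by rewrite piyD; apply: spanD; [apply: h1|apply: h2].
- by rewrite piyZ; apply: spanZ; apply: h1.
- rewrite piy_sbr; apply: span_ssum => i hi.
  have e : (i + (q - i))%N = q by lia.
  rewrite -{1}e.
  apply: span_br; first by move=> a b; apply: basis_br; lia.
  + by apply: h1; lia.
  + by apply: h2; lia.
Qed.

End SpanS.



Section NF.
Variable K : fieldType.
Local Notation ser := (ser K).
Local Notation X := (sx K).
Local Notation Yy := (sy K).
Local Notation Z := (szero K).
Local Notation Y := (@Y K).

Definition C3m (m : nat) (g : ser) : Prop :=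
  exists a b c, (a + b + c = m)%N /\ g = sbr (sbr (Y a) (Y b)) (Y c).

Lemma pixD q (f g : ser) : pix q (sadd f g) = sadd (pix q f) (pix q g).
Proof. by apply: functional_extensionality => w; rewrite /pix /sadd; case: ifP; rewrite ?addr0. Qed.
Lemma pixZ q a (f : ser) : pix q (sscale a f) = sscale a (pix q f).
Proof. by apply: functional_extensionality => w; rewrite /pix /sscale; case: ifP; rewrite ?mulr0. Qed.
Lemma pix0 q : pix q Z = Z.
Proof. by apply: functional_extensionality => w; rewrite /pix /szero; case: ifP. Qed.

Lemma pix_hom (f : ser) p q m : multihom f p q ->
  pix m f = if p == m then f else Z.
Proof.
move=> hf; apply: functional_extensionality => w; rewrite /pix.
case: (p =P m) => [<-|hne]; case: ifP => // hw.
- symmetry; apply: (mh_zero hf); by rewrite hw.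
- rewrite /szero; apply: (mh_zero hf); apply/orP; left; rewrite (eqP hw).
  by apply/eqP => e; apply: hne.
Qed.

Lemma piy_hom (f : ser) p q : multihom f p q -> piy q f = f.
Proof.
move=> hf; apply: functional_extensionality => w; rewrite /piy.
case: ifP => // /negbT h; symmetry; apply: (mh_zero hf); by rewrite h orbT.
Qed.
Lemma pix_hom' (f : ser) p q : multihom f p q -> pix p f = f.
Proof. by move=> hf; rewrite (pix_hom p hf) eqxx. Qed.

Lemma mh_T3 a b c : multihom (sbr (sbr (Y a) (Y b)) (Y c)) (a + b + c) 3.
Proof.
exact: (@mh_sbr K _ _ _ _ _ _ (@mh_sbr K _ _ _ _ _ _ (@mh_Y K a) (@mh_Y K b)) (@mh_Y K c)).
Qed.

Lemma span_pix m g : Span (C 3) g -> Span (C3m m) (pix m g).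
Proof.
elim => [|f [a [b [c ->]]]|f1 f2 _ h1 _ h2|a f _ h1].
- by rewrite pix0; apply: span0.
- rewrite (pix_hom m (@mh_T3 a b c)); case: eqP => [e|_]; last exact: span0.
  by apply: spanB; exists a, b, c.
- by rewrite pixD; apply: spanD.
- by rewrite pixZ; apply: spanZ.
Qed.

Variable m : nat.
Definition T (b : nat) : ser := sbr (sbr (Y b) (Y 0)) (Y (m - b)).
Definition Q : ser := sbr (sbr (Y 0) (Y m)) (Y 0).
Definition lin (be : nat -> K) (ga : K) : ser :=
  fun w => \sum_(1 <= b < m) be b * T b w + ga * Q w.
Definition Cpos (g : ser) : Prop :=
  exists a b c, [/\ (a + b + c = m)%N, (1 <= a)%N, (1 <= b)%N, (1 <= c)%N &
                 g = sbr (sbr (Y a) (Y b)) (Y c)].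
Definition NF (g : ser) : Prop :=
  exists u be ga, Span Cpos u /\ g = sadd u (lin be ga).

Lemma sum_nat_ind a c k (F : nat -> K) : (a <= k < c)%N ->
  \sum_(a <= i < c) (if i == k then F i else 0) = F k.
Proof.
move=> /andP [hak hkc]; elim: c hkc => [|c IH] //= hc.
rewrite big_nat_recr /=; last by lia.
case: (ltnP k c) => hk.
  by rewrite IH // (_ : (c == k) = false) ?addr0 //; apply/eqP; lia.
have -> : k = c by lia.
rewrite eqxx big1_seq ?add0r // => i; rewrite mem_index_iota => hi.
by case: eqP => //; lia.
Qed.

Lemma NF0 : NF Z.
Proof.
exists Z, (fun _ => 0), 0; split; first exact: span0.
apply: functional_extensionality => w; rewrite /sadd /lin /szero big1 ?mul0r ?addr0 //.
by move=> i _; rewrite mul0r.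
Qed.

Lemma NFD f g : NF f -> NF g -> NF (sadd f g).
Proof.
move=> [u1 [b1 [g1 [h1 ->]]]] [u2 [b2 [g2 [h2 ->]]]].
exists (sadd u1 u2), (fun i => b1 i + b2 i), (g1 + g2); split; first exact: spanD.
apply: functional_extensionality => w; rewrite /sadd /lin.
have -> : \sum_(1 <= b < m) (b1 b + b2 b) * T b w =
  \sum_(1 <= b < m) b1 b * T b w + \sum_(1 <= b < m) b2 b * T b w.
  by rewrite -big_split; apply: eq_bigr => i _; rewrite mulrDl.
ring.
Qed.

Lemma NFZ a f : NF f -> NF (sscale a f).
Proof.
move=> [u1 [b1 [g1 [h1 ->]]]].
exists (sscale a u1), (fun i => a * b1 i), (a * g1); split; first exact: spanZ.
apply: functional_extensionality => w; rewrite /sadd /sscale /lin.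
have -> : \sum_(1 <= b < m) (a * b1 b) * T b w = a * \sum_(1 <= b < m) b1 b * T b w.
  by rewrite mulr_sumr; apply: eq_bigr => i _; rewrite mulrA.
ring.
Qed.

Lemma NFT b : (1 <= b < m)%N -> NF (T b).
Proof.
move=> hb; exists Z, (fun i => if i == b then 1 else 0), 0; split; first exact: span0.
apply: functional_extensionality => w; rewrite /sadd /lin /szero mul0r addr0 add0r.
rewrite -(sum_nat_ind (fun i => T i w) hb); apply: eq_bigr => i _.
by case: eqP; rewrite ?mul1r ?mul0r.
Qed.

Lemma NFQ : NF Q.
Proof.
exists Z, (fun _ => 0), 1; split; first exact: span0.
apply: functional_extensionality => w; rewrite /sadd /lin /szero big1 ?add0r ?mul1r //.
by move=> i _; rewrite mul0r.
Qed.

Lemma NFpos g : Cpos g -> NF g.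
Proof.
move=> h; exists g, (fun _ => 0), 0; split; first exact: spanB.
apply: functional_extensionality => w; rewrite /sadd /lin big1 ?mul0r ?addr0 //.
by move=> i _; rewrite mul0r.
Qed.

Lemma NF_C3m g : C3m m g -> NF g.
Proof.
move=> [a [b [c [habc ->]]]].
case: a habc => [|a]; case: b => [|b]; case: c => [|c] habc.
- by rewrite sbr_self sbr0l; apply: NF0.
- by rewrite sbr_self sbr0l; apply: NF0.
- have -> : b.+1 = m by lia.
  exact: NFQ.
- rewrite [sbr (Y 0) _]sbr_anti sbrZl; apply: NFZ.
  have -> : c.+1 = (m - b.+1)%N by lia.
  apply: NFT; lia.
- rewrite [sbr (Y a.+1) _]sbr_anti sbrZl; apply: NFZ.
  have -> : a.+1 = m by lia.
  exact: NFQ.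
- have -> : c.+1 = (m - a.+1)%N by lia.
  apply: NFT; lia.
- rewrite jacobi; apply: NFD.
  + have -> : b.+1 = (m - a.+1)%N by lia.
    apply: NFT; lia.
  + rewrite sbr_anti; apply: NFZ.
    have -> : a.+1 = (m - b.+1)%N by lia.
    apply: NFT; lia.
- apply: NFpos; exists a.+1, b.+1, c.+1; split => //.
Qed.

Lemma NF_span g : Span (C3m m) g -> NF g.
Proof.
elim => [|f hf|f1 f2 _ h1 _ h2|a f _ h1].
- exact: NF0.
- exact: NF_C3m.
- exact: NFD.
- exact: NFZ.
Qed.

End NF.



Section Eval.
Variable K : fieldType.
Local Notation ser := (ser K).
Local Notation X := (sx K).
Local Notation Yy := (sy K).
Local Notation Z := (szero K).
Local Notation Y := (@Y K).

Lemma Y_nil p : Y p [::] = 0.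
Proof. by apply: (mh_zero (@mh_Y K p)); rewrite /= orbT. Qed.

Lemma Y_two p t v : Y p (true :: nseq t false ++ true :: v) = 0.
Proof.
apply: (mh_zero (@mh_Y K p)); apply/orP; right.
by rewrite /= count_cat /= count_nseq /=; lia.
Qed.

Lemma smul_X_rcons (f : ser) w b :
  smul f X (rcons w b) = if b == false then f w else 0.
Proof.
elim: w f => [|a w IH] f /=.
  by rewrite smul_cons smul_nil /sx /shift; case: b => /=; rewrite ?mulr0 ?mulr1 ?addr0.
rewrite smul_cons IH /shift /sx.
have -> : (a :: rcons w b == [:: false]) = false by case: w {IH}; case: a.
by rewrite mulr0 add0r.
Qed.

Lemma smul_X_true (g : ser) w : smul X g (true :: w) = 0.
Proof.
have e : smul (shift true X) g w = 0.
  by rewrite (@smul_ext _ _ Z g g) ?smul0l // => u; rewrite /shift /sx /szero.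
by rewrite smul_cons e /sx /= mul0r addr0.
Qed.

Lemma Y_line p t : Y p (true :: nseq t false) = if t == p then 1 else 0.
Proof.
elim: p t => [|p IH] t.
  by rewrite Y0 /sy; case: t.
rewrite YS sbrE smul_X_true subr0.
case: t => [|t].
  by rewrite (_ : [:: true] = rcons [::] true) // smul_X_rcons.
by rewrite nseqS_rcons -rcons_cons smul_X_rcons IH.
Qed.

Lemma smul_pref (H g : ser) (e : nat -> K) v i :
  (forall t, H (nseq t false) = e t) ->
  (forall t v', H (nseq t false ++ true :: v') = 0) ->
  smul H g (nseq i false ++ true :: v) =
  \sum_(t < i.+1) e t * g (nseq (i - t) false ++ true :: v).
Proof.
elim: i H e => [|i IH] H e h1 h2.
  rewrite big_ord_recl big_ord0 addr0 /= smul_cons.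
  rewrite (@smul_ext _ (shift true H) Z g g) ?smul0l ?addr0 //.
    by rewrite -(h1 0%N).
  by move=> u; rewrite /shift /szero; exact: (h2 0%N u).
rewrite /= smul_cons (IH (shift false H) (fun t => e t.+1)) //.
- by rewrite [RHS]big_ord_recl -(h1 0%N).
- by move=> t; rewrite /shift -h1.
- by move=> t v'; rewrite /shift -(h2 t.+1 v').
Qed.

Lemma P_eval p (g : ser) i v :
  smul (Y p) g (true :: (nseq i false ++ true :: v)) =
  if (p <= i)%N then g (nseq (i - p) false ++ true :: v) else 0.
Proof.
rewrite smul_cons Y_nil mul0r add0r.
rewrite (@smul_pref (shift true (Y p)) g (fun t => if t == p then 1 else 0) v i).
- case: leqP => hp.
    rewrite -(@sum_ind_nat K i.+1 p (fun t => g (nseq (i - t) false ++ true :: v))) //.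
    by apply: eq_bigr => j _; rewrite eq_sym; case: eqP; rewrite ?mul1r ?mul0r.
  rewrite big1 // => j _; case: eqP => [e|]; last by rewrite mul0r.
  by have := ltn_ord j; lia.
- by move=> t; rewrite /shift Y_line.
- by move=> t v'; rewrite /shift Y_two.
Qed.

Definition wi (N i : nat) : seq bool := true :: (nseq i false ++ true :: nseq (N - i) false).

Lemma tri N (c : nat -> K) :
  (forall i, (i <= N)%N ->
     \sum_(p < N.+1) c p * smul (Y p) (Y (N - p)) (wi N i) = 0) ->
  forall p, (p <= N)%N -> c p = 0.
Proof.
move=> h p; elim/ltn_ind: p => p IH hp.
have := h p hp; rewrite (bigD1 (Ordinal (hp : (p < N.+1)%N))) //= big1.
  by rewrite addr0 /wi P_eval leqnn subnn /= Y_line eqxx mulr1.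
move=> j hj; case: (ltnP j p) => hjp.
  by rewrite IH ?mul0r //; have := ltn_ord j; lia.
rewrite /wi P_eval; case: leqP; last by rewrite mulr0.
move=> hjp'; have : j = Ordinal (hp : (p < N.+1)%N) by apply/val_inj => /=; lia.
by move=> e; rewrite e eqxx in hj.
Qed.

End Eval.



Section Delta.
Variable K : fieldType.
Local Notation ser := (ser K).
Local Notation X := (sx K).
Local Notation Yy := (sy K).
Local Notation Z := (szero K).
Local Notation Y := (@Y K).

Lemma sdelta_Ypos p : (1 <= p)%N -> sdelta (Y p) = Z.
Proof. by case: p => // p _; apply: sdelta_YS. Qed.

Variable m : nat.
Local Notation T := (@T K m).
Local Notation Q := (@Q K m).
Local Notation lin := (@lin K m).

Lemma dT b : (1 <= b < m)%N -> sdelta (T b) = sbr (Y b.+1) (Y (m - b)).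
Proof.
move=> hb; rewrite /T sdelta_sbr (sdelta_Ypos (p := (m - b)%N)); last by lia.
rewrite sbr0r sadd0r sdelta_sbr sdelta_Ypos; last by lia.
by rewrite sdelta_Y0 sbr0l sadd0l -YS.
Qed.

Lemma dQ w : (1 <= m)%N ->
  sdelta Q w = 2 * sbr (Y 0) (Y m.+1) w + sbr (Y 1) (Y m) w.
Proof.
move=> hm; rewrite /Q sdelta_sbr sdelta_Y0 jacobi -!YS.
rewrite sdelta_sbr sdelta_Y0 sdelta_Ypos // sbr0r sadd0r br_X_Y sbrZl.
rewrite /sadd /sscale !sbrE; ring.
Qed.

Lemma sdelta_sum (F : nat -> ser) a c w :
  sdelta (fun u => \sum_(a <= b < c) F b u) w = \sum_(a <= b < c) sdelta (F b) w.
Proof. by rewrite /sdelta exchange_big. Qed.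

Lemma sdelta_lin be ga w :
  sdelta (lin be ga) w = \sum_(1 <= b < m) be b * sdelta (T b) w + ga * sdelta Q w.
Proof.
rewrite /lin.
have -> : sdelta (fun w => \sum_(1 <= b < m) be b * T b w + ga * Q w) w =
  sdelta (sadd (fun w => \sum_(1 <= b < m) sscale (be b) (T b) w) (sscale ga Q)) w by [].
rewrite sdeltaD /sadd sdelta_sum sdeltaZ.
by congr (_ + _); apply: eq_bigr => b _; rewrite sdeltaZ.
Qed.

Lemma sum_indR N k (F : nat -> K) : (k < N)%N ->
  \sum_(p < N) (p == k :> nat)%:R * F p = F k.
Proof.
move=> hk; rewrite -(sum_ind_nat F hk); apply: eq_bigr => i _.
by rewrite eq_sym; case: eqP; rewrite ?mul1r ?mul0r.
Qed.

Definition PP (p : nat) (w : seq bool) : K := smul (Y p) (Y (m.+1 - p)) w.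

Definition cc (be : nat -> K) (ga : K) (p : nat) : K :=
  \sum_(1 <= b < m) be b * ((p == b.+1)%:R - (p == (m - b)%N)%:R)
  + ga * (2 * (p == 0%N)%:R - 2 * (p == m.+1)%:R + (p == 1%N)%:R - (p == m)%:R).

Lemma dlin_cc be ga w : (1 <= m)%N ->
  sdelta (lin be ga) w = \sum_(p < m.+2) cc be ga p * PP p w.
Proof.
move=> hm; rewrite sdelta_lin dQ //.
rewrite [RHS](_ : _ = \sum_(p < m.+2) (\sum_(1 <= b < m) be b * ((p == b.+1 :> nat)%:R - (p == (m - b)%N :> nat)%:R)) * PP p w + \sum_(p < m.+2) (ga * (2 * (p == 0%N :> nat)%:R - 2 * (p == m.+1 :> nat)%:R + (p == 1%N :> nat)%:R - (p == m :> nat)%:R)) * PP p w); last first.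
  by rewrite -big_split; apply: eq_bigr => p _; rewrite /cc mulrDl.
congr (_ + _).
  symmetry; under eq_bigr do rewrite mulr_suml.
  rewrite exchange_big /=; apply: eq_big_nat => b hb.
  rewrite dT // sbrE.
  have e1 : smul (Y b.+1) (Y (m - b)) w = PP b.+1 w.
    by rewrite /PP subSS.
  have e2 : smul (Y (m - b)) (Y b.+1) w = PP (m - b) w.
    by rewrite /PP (_ : (m.+1 - (m - b) = b.+1)%N) //; lia.
  rewrite e1 e2 -(@sum_indR m.+2 b.+1 (fun p => PP p w)); last by lia.
  rewrite -(@sum_indR m.+2 (m - b) (fun p => PP p w)); last by lia.
  rewrite -sumrB mulr_sumr; apply: eq_bigr => i _; ring.
have e0 : sbr (Y 0) (Y m.+1) w = PP 0 w - PP m.+1 w.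
  by rewrite sbrE /PP subn0 subnn.
have e1 : sbr (Y 1) (Y m) w = PP 1 w - PP m w.
  by rewrite sbrE /PP subSS subn0 (_ : (m.+1 - m = 1)%N) //; lia.
rewrite e0 e1; symmetry.
rewrite -(@sum_indR m.+2 0 (fun p => PP p w)) //.
rewrite -(@sum_indR m.+2 m.+1 (fun p => PP p w)) //.
rewrite -(@sum_indR m.+2 1 (fun p => PP p w)) //.
rewrite -(@sum_indR m.+2 m (fun p => PP p w)) //.
rewrite -!sumrB [2 * _]mulr_sumr -big_split mulr_sumr; apply: eq_bigr => i _ /=; ring.
Qed.

End Delta.



Section Final.
Variable K : fieldType.
Local Notation ser := (ser K).
Local Notation X := (sx K).
Local Notation Yy := (sy K).
Local Notation Z := (szero K).
Local Notation Y := (@Y K).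

Lemma sum_nat_indR a c k (F : nat -> K) (P : nat -> bool) : (a <= k < c)%N ->
  (forall b, (a <= b < c)%N -> P b = (b == k)) ->
  \sum_(a <= b < c) F b * (P b)%:R = F k.
Proof.
move=> hk hP; rewrite -(sum_nat_ind F hk); apply: eq_big_nat => b hb.
by rewrite hP //; case: eqP; rewrite ?mulr1 ?mulr0.
Qed.

Lemma sum_nat_zeroR a c (F : nat -> K) (P : nat -> bool) :
  (forall b, (a <= b < c)%N -> P b = false) ->
  \sum_(a <= b < c) F b * (P b)%:R = 0.
Proof.
move=> hP; rewrite big_nat big1 // => b hb.
by rewrite hP // mulr0.
Qed.

Variable m : nat.
Local Notation T := (@T K m).
Local Notation Q := (@Q K m).
Local Notation lin := (@lin K m).
Local Notation cc := (@cc K m).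

Lemma cc_split be ga p : cc be ga p =
  \sum_(1 <= b < m) be b * (p == b.+1)%:R - \sum_(1 <= b < m) be b * (p == (m - b)%N)%:R
  + ga * (2 * (p == 0%N)%:R - 2 * (p == m.+1)%:R + (p == 1%N)%:R - (p == m)%:R).
Proof.
rewrite /cc -sumrB; congr (_ + _); apply: eq_bigr => b _; ring.
Qed.

Lemma cc0 be ga : (1 <= m)%N -> cc be ga 0 = ga * 2.
Proof.
move=> hm; rewrite cc_split !sum_nat_zeroR; try (by move=> b hb; apply/eqP; lia).
rewrite (_ : (0 == m.+1)%N = false) // (_ : (0 == m)%N = false); last by apply/eqP; lia.
rewrite /=; ring.
Qed.

Lemma cc1 be : (2 <= m)%N -> cc be 0 1 = - be m.-1.
Proof.
move=> hm; rewrite cc_split sum_nat_zeroR; last by move=> b hb; apply/eqP; lia.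
rewrite (@sum_nat_indR _ _ m.-1); first (by ring); first by lia.
by move=> b hb; apply/eqP/eqP; lia.
Qed.

Lemma ccp be p : (2 <= p)%N -> (p <= m.-1)%N -> cc be 0 p = be p.-1 - be (m - p)%N.
Proof.
move=> h1 h2; rewrite cc_split (@sum_nat_indR _ _ p.-1); first last.
- by move=> b hb; apply/eqP/eqP; lia.
- lia.
rewrite (@sum_nat_indR _ _ (m - p)%N); first last.
- by move=> b hb; apply/eqP/eqP; lia.
- lia.
ring.
Qed.

Lemma span_pos_delta u : Span (@Cpos K m) u -> sdelta u = Z.
Proof.
elim => [|g [a [b [c [_ ha hb hc ->]]]]|f1 f2 _ h1 _ h2|a f _ h1].
- exact: sdelta0.
- rewrite !sdelta_sbr !sdelta_Ypos //.
  by rewrite !sbr0l !sbr0r !sadd0r sbr0l.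
- by rewrite sdeltaD h1 h2 sadd0r.
- by rewrite sdeltaZ h1; apply: functional_extensionality => w; rewrite /sscale /szero mulr0.
Qed.

Lemma Y_lie n a : (1 <= a)%N -> lie_gen (@cor_gens K n) (Y a).
Proof.
case: a => // a _; elim: a => [|a IH].
  by rewrite YS Y0; apply: lie_gen_base; right; left.
by rewrite YS; apply: lie_gen_br => //; apply: lie_gen_base; left.
Qed.

Lemma zero_lie n : lie_gen (@cor_gens K n) Z.
Proof. by rewrite (szero_scale X); apply: lie_gen_scale; apply: lie_gen_base; left. Qed.

Lemma span_pos_lie n u : Span (@Cpos K m) u -> lie_gen (@cor_gens K n) u.
Proof.
elim => [|g [a [b [c [_ ha hb hc ->]]]]|f1 f2 _ h1 _ h2|a f _ h1].
- exact: zero_lie.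
- by apply: lie_gen_br; [apply: lie_gen_br|]; apply: Y_lie.
- exact: lie_gen_add.
- exact: lie_gen_scale.
Qed.

Lemma gen_T k : (1 <= k <= m)%N ->
  gen_elt K (m + 3) k = fun w => - (T (m - k) w + T k.-1 w).
Proof.
move=> hk; apply: functional_extensionality => w.
rewrite /gen_elt /ssub !lbr_cat -/(Y k) -/(Y (m + 3 - 3 - k)) -/(Y k.-1).
rewrite -/(Y (m + 3 - 2 - k)) /=.
have -> : (m + 3 - 3 - k = m - k)%N by lia.
have -> : (k - 1 = k.-1)%N by lia.
rewrite -/(Y k.-1) /T sbr_anti -Y0.
have -> : (m - (m - k) = k)%N by lia.
have -> : (m + 3 - 2 - k = m - k.-1)%N by lia.
by rewrite /sscale; ring.
Qed.

End Final.



Section Main.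
Variable K : fieldType.
Local Notation ser := (ser K).
Local Notation X := (sx K).
Local Notation Yy := (sy K).
Local Notation Z := (szero K).
Local Notation Y := (@Y K).

Lemma lie_sum n a c (F : nat -> ser) :
  (forall b, (a <= b < c)%N -> lie_gen (@cor_gens K n) (F b)) ->
  lie_gen (@cor_gens K n) (fun w => \sum_(a <= b < c) F b w).
Proof.
elim: c => [|c IH] h.
  have -> : (fun w => \sum_(a <= b < 0) F b w) = Z.
    by apply: functional_extensionality => w; rewrite big_geq.
  exact: zero_lie.
case: (leqP a c) => hac.
  have -> : (fun w => \sum_(a <= b < c.+1) F b w) =
            sadd (fun w => \sum_(a <= b < c) F b w) (F c).
    by apply: functional_extensionality => w; rewrite big_nat_recr.
  apply: lie_gen_add; first by apply: IH => b hb; apply: h; lia.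
  by apply: h; lia.
have -> : (fun w => \sum_(a <= b < c.+1) F b w) = Z.
  by apply: functional_extensionality => w; rewrite big_geq.
exact: zero_lie.
Qed.

Lemma forward n g : (3 <= n)%N -> lie_gen (@cor_gens K n) g -> sdelta g = Z.
Proof.
move=> hn; elim => [f [->|[->|[k [h1 h2 ->]]]] | f1 f2 _ h1 _ h2 | a f _ h1 | f1 f2 _ h1 _ h2].
- exact: sdelta_sx.
- by rewrite -Y0 -YS sdelta_YS.
- have [m em] : exists m, n = (m + 3)%N by exists (n - 3)%N; lia.
  subst n.
  have hk : (1 <= k <= m)%N by lia.
  rewrite (gen_T K hk).
  have -> : (fun w => - (@T K m (m - k) w + @T K m k.-1 w)) =
            sscale (-1) (sadd (@T K m (m - k)) (@T K m k.-1)).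
    by apply: functional_extensionality => w; rewrite /sscale /sadd mulN1r.
  rewrite sdeltaZ sdeltaD !(dT K); try lia.
  apply: functional_extensionality => w.
  rewrite /sscale /sadd /szero !sbrE.
  have -> : (m - (m - k) = k)%N by lia.
  have -> : (m - k.-1 = (m - k).+1)%N by lia.
  have -> : k.-1.+1 = k by lia.
  ring.
- by rewrite sdeltaD h1 h2 sadd0r.
- by rewrite sdeltaZ h1; apply: functional_extensionality => w; rewrite /sscale /szero mulr0.
- by rewrite sdelta_sbr h1 h2 sbr0l sbr0r sadd0r.
Qed.

Variable m : nat.
Local Notation T := (@T K m).
Local Notation lin := (@lin K m).

Lemma lin_rep be : (2 <= m)%N -> be m.-1 = 0 ->
  (forall b, (1 <= b)%N -> (b <= m - 2)%N -> be b = be (m.-1 - b)%N) ->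
  (2 : K) != 0 ->
  lin be 0 = fun w => \sum_(1 <= b < m.-1)
     sscale (- (be b / 2)) (gen_elt K (m + 3) (maxn (m - b) b.+1)) w.
Proof.
move=> hm hbe hsym h2; apply: functional_extensionality => w.
rewrite /lin mul0r addr0.
have hm0 : (0 < m)%N by lia.
rewrite -{1}(prednK hm0) big_nat_recr /=; last by lia.
rewrite hbe mul0r addr0.
set S := \sum_(1 <= b < m.-1) be b * T b w.
have eS : S = \sum_(1 <= b < m.-1) be b * T (m.-1 - b)%N w.
  rewrite /S big_nat_rev /=; apply: eq_big_nat => b hb.
  have -> : (1 + m.-1 - b.+1 = m.-1 - b)%N by lia.
  by rewrite -hsym //; lia.
have eR : \sum_(1 <= b < m.-1) sscale (- (be b / 2)) (gen_elt K (m + 3) (maxn (m - b) b.+1)) w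
        = \sum_(1 <= b < m.-1) (be b / 2) * (T b w + T (m.-1 - b)%N w).
  apply: eq_big_nat => b hb.
  rewrite (@gen_T K m (maxn (m - b) b.+1)); last by rewrite /maxn; case: ifP; lia.
  rewrite /sscale /maxn; case: ifP => hc.
    have -> : (m - b.+1 = m.-1 - b)%N by lia.
    by rewrite /=; ring.
  have -> : (m - (m - b) = b)%N by lia.
  have -> : ((m - b).-1 = m.-1 - b)%N by lia.
  ring.
rewrite eR.
have -> : \sum_(1 <= b < m.-1) (be b / 2) * (T b w + T (m.-1 - b)%N w) = (S + S) / 2.
  rewrite {2}eS /S -big_split mulr_suml; apply: eq_bigr => b _ /=; field.
  exact: h2.
field; exact: h2.
Qed.

End Main.

Theorem corollary5p6 (K : fieldType) (charK0 : [pchar K] =i pred0)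
  (f : ser K) (n : nat) :
  in_L f -> (exists w, f w != 0) -> (3 <= n)%N -> multihom f (n - 3) 3 ->
  ((forall w, sdelta f w = 0) <-> lie_gen (cor_gens n) f).
Proof.
move=> hin _ hn hmh; split; last first.
  by move=> hg w; rewrite (forward hn hg).
move=> hd.
have h2 : (2 : K) != 0.
  have h := (pcharf0P K).1 charK0 2.
  by rewrite h.
have [m em] : exists m, n = (m + 3)%N by exists (n - 3)%N; lia.
subst n; rewrite addnK in hmh.
have hS : Span (@C K 3) f by rewrite -(piy_hom hmh); apply: main_span.
have hS' : Span (@C3m K m) f by rewrite -(pix_hom' hmh); apply: span_pix.
have [u [be [ga [hu ef]]]] := NF_span hS'.
have hdl : forall w, sdelta (@lin K m be ga) w = 0.
  move=> w; have := hd w; rewrite ef sdeltaD (span_pos_delta hu) /sadd /szero add0r.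
  done.
rewrite ef; apply: lie_gen_add; first exact: (span_pos_lie (m + 3) hu).
case: (m =P 0%N) => [m0|hm0].
  subst m.
  have -> : @lin K 0 be ga = szero K.
    apply: functional_extensionality => w.
    by rewrite /lin /Q big_geq // sbr_self sbr0l /szero mulr0 add0r.
  exact: zero_lie.
have hm1 : (1 <= m)%N by lia.
have hc : forall p, (p <= m.+1)%N -> @cc K m be ga p = 0.
  apply: tri => i hi.
  by move: (hdl (wi m.+1 i)); rewrite (dlin_cc _ _ _ hm1) /PP.
have ega : ga = 0.
  have := hc 0%N isT; rewrite cc0 // => /eqP; rewrite mulf_eq0 (negbTE h2) orbF.
  by move/eqP.
subst ga.
case: (m =P 1%N) => [m1|hm2].
  subst m.
  have -> : @lin K 1 be 0 = szero K.
    apply: functional_extensionality => w.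
    by rewrite /lin big_geq // mul0r addr0.
  exact: zero_lie.
have hm2' : (2 <= m)%N by lia.
have hbe : be m.-1 = 0.
  by have := hc 1%N ltac:(lia); rewrite cc1 // => /eqP; rewrite oppr_eq0 => /eqP.
have hsym : forall b, (1 <= b)%N -> (b <= m - 2)%N -> be b = be (m.-1 - b)%N.
  move=> b hb1 hb2; have := hc b.+1 ltac:(lia); rewrite ccp; try lia.
  move=> /eqP; rewrite subr_eq0 => /eqP ->.
  by have -> : (m - b.+1 = m.-1 - b)%N by lia.
rewrite (lin_rep hm2' hbe hsym h2).
apply: lie_sum => b hb; apply: lie_gen_scale; apply: lie_gen_base.
right; right; exists (maxn (m - b) b.+1); split => //; rewrite /maxn; case: ifP; lia.
Qed.
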